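(* The Norton–Sakuma algebra $V_{4A}$ has infinitely many maximal associative subalgebras. However, it has only two non-trivial maximal associative subalgebras.
   Context: $V_{4A}$ is the $5$-dimensional real commutative algebra (with identity and positive definite associative inner product) generated by two $2A$-axes $a_t,a_g$ of the Griess algebra whose involutions $t,g$ have product $tg$ in Monster class $4A$; equivalently, the algebra generated by two Majorana axes (idempotents of length $1$, $\mathrm{ad}$-diagonalizable with eigenvalues in $\{0,1,\frac14,\frac1{32}\}$) whose Majorana involutions have product of order $4$ and with $(a_t,a_g)=\frac1{32}$. It has basis $a_0,a_1,a_2,a_3,v$ with $a_i=\psi(t\rho^i)$ type axes, products $a_i\cdot a_i=a_i$, $v\cdot v=v$, $a_0\cdot a_1=\frac1{64}(3a_0+3a_1+a_2+a_3-3v)$, $a_0\cdot v=\frac1{16}(5a_0-2a_1-a_2-2a_3+3v)$, $a_0\cdot a_2=0$, and the remaining products obtained from the dihedral symmetry of order $8$ permuting indices $i\in\mathbb Z/4$ (generated by $i\mapsto -i$ and $i\mapsto 1-i$) and fixing $v$; $(a_i,a_i)=1$, $(a_i,a_{i\pm1})=\frac1{32}$, $(a_i,a_{i+2})=0$, $(a_i,v)=\frac38$, $(v,v)=2$. For a non-zero idempotent $x\neq\mathbb 1$, $V_x$ is the span of $\{x,\mathbb 1-x\}$; an associative subalgebra is trivial if it equals some $V_x$ (or the subalgebra generated by $0$ or $\mathbb 1$), non-trivial otherwise. Maximal associative means maximal under inclusion among associative subalgebras. *)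

(* Defs.v *)
From HB Require Import structures.
From mathcomp Require Import all_boot all_order all_algebra.
From mathcomp Require Import reals.
Set Implicit Arguments. Unset Strict Implicit. Unset Printing Implicit Defensive.
Import Order.TTheory GRing.Theory Num.Theory.
Local Open Scope ring_scope.

Section V4A.
Variable R : realType.

(* Underlying vector space: R^5, coordinates w.r.t. basis a_0,a_1,a_2,a_3,v
   (index 4 is v). *)
Definition V4A := 'rV[R]_5.

(* coefficient of basis vector k in the product (basis i) * (basis j) *)
Definition av_coef (i k : nat) : R :=
  if k == 4%N then 3 / 16
  else match ((k + 4 - i) %% 4)%N with
       | 0%N => 5 / 16
       | 2%N => - (1 / 16)
       | _ => - (2 / 16)
       end.

Definition v4a_coef (i j k : nat) : R :=
  if (i == 4%N) && (j == 4%N) then (k == 4%N)%:R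
  else if i == 4%N then av_coef j k
  else if j == 4%N then av_coef i k
  else match ((j + 4 - i) %% 4)%N with
       | 0%N => (k == i)%:R                     (* a_i a_i = a_i *)
       | 2%N => 0                               (* a_i a_{i+2} = 0 *)
       | _ => if k == 4%N then - (3 / 64)       (* a_i a_{i+-1} *)
              else if (k == i) || (k == j) then 3 / 64 else 1 / 64
       end.

Definition v4a_mul (x y : V4A) : V4A :=
  \row_(k < 5) \sum_(i < 5) \sum_(j < 5) x 0 i * y 0 j * v4a_coef i j k.

Definition is_identity (e : V4A) : Prop := forall x, v4a_mul e x = x.

Definition idempotent (x : V4A) : Prop := v4a_mul x x = x.

Definition is_subalgebra (U : {vspace V4A}) : Prop :=
  forall x y, x \in U -> y \in U -> v4a_mul x y \in U.

Definition is_assoc_subalgebra (U : {vspace V4A}) : Prop :=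
  is_subalgebra U /\
  forall x y z, x \in U -> y \in U -> z \in U ->
    v4a_mul (v4a_mul x y) z = v4a_mul x (v4a_mul y z).

Definition is_max_assoc_subalgebra (U : {vspace V4A}) : Prop :=
  is_assoc_subalgebra U /\
  forall W : {vspace V4A}, is_assoc_subalgebra W -> (U <= W)%VS -> W = U.

Definition is_trivial_subalgebra (U : {vspace V4A}) : Prop :=
  exists e : V4A, is_identity e /\
    [\/ U = 0%VS, U = <[e]>%VS |
        exists x : V4A, [/\ idempotent x, x != 0, x != e &
                            U = <<[:: x; e - x]>>%VS]].

End V4A.

(* Main.v *)
Require Import Defs.
From HB Require Import structures.
From mathcomp Require Import all_boot all_order all_algebra.
From mathcomp Require Import reals.
From mathcomp Require Import ring lra zify.
Import Order.TTheory GRing.Theory Num.Theory.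
Local Open Scope ring_scope.

Module A.
Set Implicit Arguments. Unset Strict Implicit. Unset Printing Implicit Defensive.
Local Open Scope ring_scope.
Section Work.
Variable R : realType.
Local Notation V := (V4A R).
Local Notation mul := (@v4a_mul R).

Definition i0 : 'I_5 := @Ordinal 5 0 isT.
Definition i1 : 'I_5 := @Ordinal 5 1 isT.
Definition i2 : 'I_5 := @Ordinal 5 2 isT.
Definition i3 : 'I_5 := @Ordinal 5 3 isT.
Definition i4 : 'I_5 := @Ordinal 5 4 isT.

Definition vec (a b c d e : R) : V := \row_(i < 5) [:: a; b; c; d; e]`_i.

Lemma vecE (x : V) : x = vec (x 0 i0) (x 0 i1) (x 0 i2) (x 0 i3) (x 0 i4).
Proof.
apply/rowP => k; rewrite mxE.
case: k => [[|[|[|[|[|k]]]]] Hk] //=; rewrite ?ord1;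
  by congr (x _ _); apply: val_inj.
Qed.

Lemma vec_eq a b c d e a' b' c' d' e' :
  a = a' -> b = b' -> c = c' -> d = d' -> e = e' ->
  vec a b c d e = vec a' b' c' d' e'.
Proof. by move=> -> -> -> -> ->. Qed.

Lemma vec0 a b c d e : vec a b c d e 0 i0 = a. Proof. by rewrite mxE. Qed.
Lemma vec1 a b c d e : vec a b c d e 0 i1 = b. Proof. by rewrite mxE. Qed.
Lemma vec2 a b c d e : vec a b c d e 0 i2 = c. Proof. by rewrite mxE. Qed.
Lemma vec3 a b c d e : vec a b c d e 0 i3 = d. Proof. by rewrite mxE. Qed.
Lemma vec4 a b c d e : vec a b c d e 0 i4 = e. Proof. by rewrite mxE. Qed.

Definition P0 (x0 x1 x2 x3 x4 y0 y1 y2 y3 y4 : R) :=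
  (1) * (x0 * y0) + (3 / 64) * (x0 * y1 + x1 * y0) + (3 / 64) * (x0 * y3 + x3 * y0) + (5 / 16) * (x0 * y4 + x4 * y0) + (1 / 64) * (x1 * y2 + x2 * y1) + (-1 / 8) * (x1 * y4 + x4 * y1) + (1 / 64) * (x2 * y3 + x3 * y2) + (-1 / 16) * (x2 * y4 + x4 * y2) + (-1 / 8) * (x3 * y4 + x4 * y3).

Definition P1 (x0 x1 x2 x3 x4 y0 y1 y2 y3 y4 : R) :=
  (3 / 64) * (x0 * y1 + x1 * y0) + (1 / 64) * (x0 * y3 + x3 * y0) + (-1 / 8) * (x0 * y4 + x4 * y0) + (1) * (x1 * y1) + (3 / 64) * (x1 * y2 + x2 * y1) + (5 / 16) * (x1 * y4 + x4 * y1) + (1 / 64) * (x2 * y3 + x3 * y2) + (-1 / 8) * (x2 * y4 + x4 * y2) + (-1 / 16) * (x3 * y4 + x4 * y3).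

Definition P2 (x0 x1 x2 x3 x4 y0 y1 y2 y3 y4 : R) :=
  (1 / 64) * (x0 * y1 + x1 * y0) + (1 / 64) * (x0 * y3 + x3 * y0) + (-1 / 16) * (x0 * y4 + x4 * y0) + (3 / 64) * (x1 * y2 + x2 * y1) + (-1 / 8) * (x1 * y4 + x4 * y1) + (1) * (x2 * y2) + (3 / 64) * (x2 * y3 + x3 * y2) + (5 / 16) * (x2 * y4 + x4 * y2) + (-1 / 8) * (x3 * y4 + x4 * y3).

Definition P3 (x0 x1 x2 x3 x4 y0 y1 y2 y3 y4 : R) :=
  (1 / 64) * (x0 * y1 + x1 * y0) + (3 / 64) * (x0 * y3 + x3 * y0) + (-1 / 8) * (x0 * y4 + x4 * y0) + (1 / 64) * (x1 * y2 + x2 * y1) + (-1 / 16) * (x1 * y4 + x4 * y1) + (3 / 64) * (x2 * y3 + x3 * y2) + (-1 / 8) * (x2 * y4 + x4 * y2) + (1) * (x3 * y3) + (5 / 16) * (x3 * y4 + x4 * y3).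

Definition P4 (x0 x1 x2 x3 x4 y0 y1 y2 y3 y4 : R) :=
  (-3 / 64) * (x0 * y1 + x1 * y0) + (-3 / 64) * (x0 * y3 + x3 * y0) + (3 / 16) * (x0 * y4 + x4 * y0) + (-3 / 64) * (x1 * y2 + x2 * y1) + (3 / 16) * (x1 * y4 + x4 * y1) + (-3 / 64) * (x2 * y3 + x3 * y2) + (3 / 16) * (x2 * y4 + x4 * y2) + (3 / 16) * (x3 * y4 + x4 * y3) + (1) * (x4 * y4).

Lemma sum5 (f : 'I_5 -> R) : \sum_(i < 5) f i = f i0 + f i1 + f i2 + f i3 + f i4.
Proof.
rewrite !big_ord_recr big_ord0 /= add0r.
by congr (_ + _ + _ + _ + _); congr f; apply: val_inj.
Qed.

Lemma mulE0 (x y : V) : mul x y 0 i0 = P0 (x 0 i0) (x 0 i1) (x 0 i2) (x 0 i3) (x 0 i4) (y 0 i0) (y 0 i1) (y 0 i2) (y 0 i3) (y 0 i4).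
Proof. by rewrite /v4a_mul mxE !sum5 /v4a_coef /av_coef /= /P0; field. Qed.

Lemma mulE1 (x y : V) : mul x y 0 i1 = P1 (x 0 i0) (x 0 i1) (x 0 i2) (x 0 i3) (x 0 i4) (y 0 i0) (y 0 i1) (y 0 i2) (y 0 i3) (y 0 i4).
Proof. by rewrite /v4a_mul mxE !sum5 /v4a_coef /av_coef /= /P1; field. Qed.

Lemma mulE2 (x y : V) : mul x y 0 i2 = P2 (x 0 i0) (x 0 i1) (x 0 i2) (x 0 i3) (x 0 i4) (y 0 i0) (y 0 i1) (y 0 i2) (y 0 i3) (y 0 i4).
Proof. by rewrite /v4a_mul mxE !sum5 /v4a_coef /av_coef /= /P2; field. Qed.

Lemma mulE3 (x y : V) : mul x y 0 i3 = P3 (x 0 i0) (x 0 i1) (x 0 i2) (x 0 i3) (x 0 i4) (y 0 i0) (y 0 i1) (y 0 i2) (y 0 i3) (y 0 i4).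
Proof. by rewrite /v4a_mul mxE !sum5 /v4a_coef /av_coef /= /P3; field. Qed.

Lemma mulE4 (x y : V) : mul x y 0 i4 = P4 (x 0 i0) (x 0 i1) (x 0 i2) (x 0 i3) (x 0 i4) (y 0 i0) (y 0 i1) (y 0 i2) (y 0 i3) (y 0 i4).
Proof. by rewrite /v4a_mul mxE !sum5 /v4a_coef /av_coef /= /P4; field. Qed.

Lemma mulE (x y : V) : mul x y = vec (P0 (x 0 i0) (x 0 i1) (x 0 i2) (x 0 i3) (x 0 i4) (y 0 i0) (y 0 i1) (y 0 i2) (y 0 i3) (y 0 i4)) (P1 (x 0 i0) (x 0 i1) (x 0 i2) (x 0 i3) (x 0 i4) (y 0 i0) (y 0 i1) (y 0 i2) (y 0 i3) (y 0 i4)) (P2 (x 0 i0) (x 0 i1) (x 0 i2) (x 0 i3) (x 0 i4) (y 0 i0) (y 0 i1) (y 0 i2) (y 0 i3) (y 0 i4)) (P3 (x 0 i0) (x 0 i1) (x 0 i2) (x 0 i3) (x 0 i4) (y 0 i0) (y 0 i1) (y 0 i2) (y 0 i3) (y 0 i4)) (P4 (x 0 i0) (x 0 i1) (x 0 i2) (x 0 i3) (x 0 i4) (y 0 i0) (y 0 i1) (y 0 i2) (y 0 i3) (y 0 i4)).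
Proof. by rewrite {1}(vecE (mul x y)) mulE0 mulE1 mulE2 mulE3 mulE4. Qed.

Lemma ord5P (k : 'I_5) : k = i0 \/ k = i1 \/ k = i2 \/ k = i3 \/ k = i4.
Proof.
case: k => [[|[|[|[|[|k]]]]] Hk] //.
- by left; apply: val_inj.
- by right; left; apply: val_inj.
- by right; right; left; apply: val_inj.
- by right; right; right; left; apply: val_inj.
- by right; right; right; right; apply: val_inj.
Qed.

Lemma rowP5 (x y : V) : x 0 i0 = y 0 i0 -> x 0 i1 = y 0 i1 -> x 0 i2 = y 0 i2 ->
  x 0 i3 = y 0 i3 -> x 0 i4 = y 0 i4 -> x = y.
Proof.
move=> h0 h1 h2 h3 h4; apply/rowP => k.
by case: (ord5P k) => [->|[->|[->|[->|->]]]].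
Qed.

Ltac vcomp := apply: rowP5;
  rewrite !(mulE0, mulE1, mulE2, mulE3, mulE4, mxE) /P0 /P1 /P2 /P3 /P4 /=; by field.

Lemma vmulC (x y : V) : mul x y = mul y x.
Proof. by vcomp. Qed.
Lemma vmulDl (x y z : V) : mul (x + y) z = mul x z + mul y z.
Proof. by vcomp. Qed.
Lemma vmulDr (x y z : V) : mul z (x + y) = mul z x + mul z y.
Proof. by vcomp. Qed.
Lemma vmulZl a (x y : V) : mul (a *: x) y = a *: mul x y.
Proof. by vcomp. Qed.
Lemma vmulZr a (x y : V) : mul y (a *: x) = a *: mul y x.
Proof. by vcomp. Qed.
Lemma vmulNl (x y : V) : mul (- x) y = - mul x y.
Proof. by vcomp. Qed.
Lemma vmulNr (x y : V) : mul y (- x) = - mul y x.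
Proof. by vcomp. Qed.
Lemma vmulBl (x y z : V) : mul (x - y) z = mul x z - mul y z.
Proof. by rewrite vmulDl vmulNl. Qed.
Lemma vmulBr (x y z : V) : mul z (x - y) = mul z x - mul z y.
Proof. by rewrite vmulDr vmulNr. Qed.
Lemma vmul0l (x : V) : mul 0 x = 0.
Proof. by vcomp. Qed.
Lemma vmul0r (x : V) : mul x 0 = 0.
Proof. by vcomp. Qed.

Definition one : V := vec (4/5) (4/5) (4/5) (4/5) (2/5).
Lemma one_mul (x : V) : mul one x = x.
Proof. by vcomp. Qed.
Lemma mul_one (x : V) : mul x one = x.
Proof. by rewrite vmulC one_mul. Qed.

Definition ell (x : V) := x 0 i0 + x 0 i1 + x 0 i2 + x 0 i3 + 2 * x 0 i4.
Definition Qf (x : V) :=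
  let u := x 0 i0 + x 0 i2 in let w := x 0 i1 + x 0 i3 in
  let d := x 0 i0 - x 0 i2 in let g := x 0 i1 - x 0 i3 in
  2 * (x 0 i4 + 3 / 16 * (u + w)) ^+ 2 +
  (10 * (u - w) ^+ 2 + 100 * u ^+ 2 + 100 * w ^+ 2 + 128 * d ^+ 2 + 128 * g ^+ 2) / 256.

Lemma ell_sq (x : V) : ell (mul x x) = Qf x.
Proof.
rewrite /ell /Qf !(mulE0, mulE1, mulE2, mulE3, mulE4) /P0 /P1 /P2 /P3 /P4 /=; by field.
Qed.

Lemma Qf_ge0 (x : V) : 0 <= Qf x.
Proof.
rewrite /Qf /=.
apply: addr_ge0; first by apply: mulr_ge0 => //; apply: sqr_ge0.
apply: divr_ge0 => //.
by rewrite !addr_ge0 // mulr_ge0 // sqr_ge0.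
Qed.

Lemma Qf_eq0 (x : V) : Qf x = 0 -> x = 0.
Proof.
rewrite /Qf /= => H.
set u := x 0 i0 + x 0 i2 in H; set w := x 0 i1 + x 0 i3 in H.
set d := x 0 i0 - x 0 i2 in H; set g := x 0 i1 - x 0 i3 in H.
set z := x 0 i4 + _ in H.
have hz := sqr_ge0 z; have hu := sqr_ge0 u; have hw := sqr_ge0 w.
have hd := sqr_ge0 d; have hg := sqr_ge0 g; have huw := sqr_ge0 (u - w).
have u0 : u = 0 by apply/eqP; rewrite -sqrf_eq0; apply/eqP; lra.
have w0 : w = 0 by apply/eqP; rewrite -sqrf_eq0; apply/eqP; lra.
have d0 : d = 0 by apply/eqP; rewrite -sqrf_eq0; apply/eqP; lra.
have g0 : g = 0 by apply/eqP; rewrite -sqrf_eq0; apply/eqP; lra.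
have z0 : z = 0 by apply/eqP; rewrite -sqrf_eq0; apply/eqP; lra.
move: u0 w0 d0 g0 z0; rewrite /z /u /w /d /g => u0 w0 d0 g0 z0.
apply: rowP5; rewrite !mxE /=; lra.
Qed.

Lemma Qf_gt0 (x : V) : x != 0 -> 0 < Qf x.
Proof.
move=> nx; rewrite lt_def Qf_ge0 andbT; apply/eqP => /Qf_eq0 h.
by move: nx; rewrite h eqxx.
Qed.

Lemma ellD (x y : V) : ell (x + y) = ell x + ell y.
Proof. rewrite /ell !mxE; ring. Qed.
Lemma ellZ a (x : V) : ell (a *: x) = a * ell x.
Proof. rewrite /ell !mxE; ring. Qed.
Lemma ellN (x : V) : ell (- x) = - ell x.
Proof. rewrite /ell !mxE; ring. Qed.
Lemma ellB (x y : V) : ell (x - y) = ell x - ell y.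
Proof. by rewrite ellD ellN. Qed.
Lemma ell_one : ell one = 4.
Proof. by rewrite /ell /one !mxE /=; field. Qed.

Definition ax0 : V := vec 1 0 0 0 0.
Definition ax1 : V := vec 0 1 0 0 0.
Definition ax2 : V := vec 0 0 1 0 0.
Definition ax3 : V := vec 0 0 0 1 0.
Definition vv : V := vec 0 0 0 0 1.

End Work.

Ltac freeze := repeat match goal with |- context[v4a_mul ?a ?b] =>
  let m := fresh "m" in set m := v4a_mul a b; clearbody m end.
Ltac lincomb := freeze; apply: rowP5;
  rewrite /one /ax0 /ax1 /ax2 /ax3 /vv ?mxE /=; field.
Ltac vcomp := apply: rowP5;
  rewrite /one /ax0 /ax1 /ax2 /ax3 /vv !(mulE0, mulE1, mulE2, mulE3, mulE4, mxE) /P0 /P1 /P2 /P3 /P4 /=; field.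

End A.
Import A.

Module B.
Set Implicit Arguments. Unset Strict Implicit. Unset Printing Implicit Defensive.
Local Open Scope ring_scope.
Section Arith.
Variable R : realType.

Lemma prod0_2 (x y : R) : x * y = 0 -> x = 0 \/ y = 0.
Proof. by move/eqP; rewrite mulf_eq0 => /orP [/eqP->|/eqP->]; [left|right]. Qed.

Lemma prod0_3 (x y z : R) : x * y * z = 0 -> [\/ x = 0, y = 0 | z = 0].
Proof.
move/prod0_2 => [/prod0_2 [h|h]|h]; by [apply: Or31|apply: Or32|apply: Or33].
Qed.

Lemma idem_cases (a b g s t : R) :
  a ^+ 2 + a * b / 4 + a * g / 2 - b * g / 2 + s ^+ 2 = a ->
  b ^+ 2 + a * b / 4 - a * g / 2 + b * g / 2 + t ^+ 2 = b ->
  g ^+ 2 - 3 * a * b / 8 + 3 * a * g / 4 + 3 * b * g / 4 = g ->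
  s * (2 * a + b / 8 + 3 * g / 4 - 1) = 0 ->
  t * (a / 8 + 2 * b + 3 * g / 4 - 1) = 0 ->
  let l := 2 * (a + b + g) in
  (l = 0 \/ l = 1 \/ l = 12/7 \/ l = 2 \/ l = 16/7 \/ l = 3 \/ l = 4) /\
  (l = 1 -> (b = 0 /\ g = 0 /\ t = 0 /\ a = 1/2 /\ (s = 1/2 \/ s = - (1/2))) \/
            (a = 0 /\ g = 0 /\ s = 0 /\ b = 1/2 /\ (t = 1/2 \/ t = - (1/2)))).
Proof.
move=> Ep Eq Ev Ed Eg l.
have [s0|s0] := eqVneq s 0; have [t0|t0] := eqVneq t 0.
-
  subst s t.
  have : (a - b) * (a + b + g - 1) = 0 by lra.
  move/prod0_2 => [hab|habg]; last first.
    have hl : l = 2 by rewrite /l; lra.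
    by split; [do 3 right; left | move=> h; exfalso; lra].
  have hb : b = a by lra.
  subst b.
  have : a * (5 * a / 4 - 1) = 0 by lra.
  move/prod0_2 => [a0|a45].
    subst a.
    have : g * (g - 1) = 0 by lra.
    move/prod0_2 => [g0|g1].
      have hl : l = 0 by rewrite /l; lra.
      by split; [left | move=> h; exfalso; lra].
    have hl : l = 2 by rewrite /l; lra.
    by split; [do 3 right; left | move=> h; exfalso; lra].
  have ha : a = 4/5 by lra.
  subst a.
  have : (g - 2/5) * (g + 3/5) = 0 by lra.
  move/prod0_2 => [g0|g1].
    have hl : l = 4 by rewrite /l; lra.
    by split; [do 6 right | move=> h; exfalso; lra].
  have hl : l = 2 by rewrite /l; lra.
  by split; [do 3 right; left | move=> h; exfalso; lra].
-
  subst s.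
  have hb : b = 1/2 - a/16 - 3 * g / 8.
    move: Eg => /prod0_2 [h|h]; [by move: t0; rewrite h eqxx | lra].
  subst b.
  pose EpL := a ^+ 2 + a * (1/2 - a/16 - 3 * g / 8) / 4 + a * g / 2 - (1/2 - a/16 - 3 * g / 8) * g / 2 - a.
  have Ep0 : EpL = 0 by rewrite /EpL; lra.
  pose EvL := g ^+ 2 - 3 * a * (1/2 - a/16 - 3 * g / 8) / 8 + 3 * a * g / 4 + 3 * (1/2 - a/16 - 3 * g / 8) * g / 4 - g.
  have Ev0 : EvL = 0 by rewrite /EvL; lra.
  have h1 : a * EpL = 0 by rewrite Ep0 mulr0.
  have h2 : g * EpL = 0 by rewrite Ep0 mulr0.
  have h3 : a * EvL = 0 by rewrite Ev0 mulr0.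
  have h4 : g * EvL = 0 by rewrite Ev0 mulr0.
  have : (l - 1) * (l - 2) * (l - 3) = 0.
    rewrite /l; move: h1 h2 h3 h4; rewrite /EpL /EvL => h1 h2 h3 h4; lra.
  move/prod0_3 => [h|h|h].
  + have hl : l = 1 by lra.
    split; [by right; left | move=> _].
    have L0 : 15 * a / 8 + 5 * g / 4 = 0 by move: hl; rewrite /l; lra.
    have h5 : a * (15 * a / 8 + 5 * g / 4) = 0 by rewrite L0 mulr0.
    have h6 : g * (15 * a / 8 + 5 * g / 4) = 0 by rewrite L0 mulr0.
    have ha0 : a = 0 by move: h5 h6 Ep0 Ev0; rewrite /EpL /EvL; lra.
    have hg0 : g = 0 by move: h5 h6 Ep0 Ev0; rewrite /EpL /EvL; lra.
    subst a g.
    right; do 3 (split; first by []); split; first by lra.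
    have : (t - 1/2) * (t + 1/2) = 0 by lra.
    by move/prod0_2 => [h'|h']; [left|right]; lra.
  + have hl : l = 2 by lra.
    by split; [do 3 right; left | move=> h'; exfalso; lra].
  + have hl : l = 3 by lra.
    by split; [do 5 right; left | move=> h'; exfalso; lra].
-
  subst t.
  have ha : a = 1/2 - b/16 - 3 * g / 8.
    move: Ed => /prod0_2 [h|h]; [by move: s0; rewrite h eqxx | lra].
  subst a.
  pose EqL := b ^+ 2 + (1/2 - b/16 - 3 * g / 8) * b / 4 - (1/2 - b/16 - 3 * g / 8) * g / 2 + b * g / 2 - b.
  have Eq0 : EqL = 0 by rewrite /EqL; lra.
  pose EvL := g ^+ 2 - 3 * (1/2 - b/16 - 3 * g / 8) * b / 8 + 3 * (1/2 - b/16 - 3 * g / 8) * g / 4 + 3 * b * g / 4 - g.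
  have Ev0 : EvL = 0 by rewrite /EvL; lra.
  have h1 : b * EqL = 0 by rewrite Eq0 mulr0.
  have h2 : g * EqL = 0 by rewrite Eq0 mulr0.
  have h3 : b * EvL = 0 by rewrite Ev0 mulr0.
  have h4 : g * EvL = 0 by rewrite Ev0 mulr0.
  have : (l - 1) * (l - 2) * (l - 3) = 0.
    rewrite /l; move: h1 h2 h3 h4; rewrite /EqL /EvL => h1 h2 h3 h4; lra.
  move/prod0_3 => [h|h|h].
  + have hl : l = 1 by lra.
    split; [by right; left | move=> _].
    have L0 : 15 * b / 8 + 5 * g / 4 = 0 by move: hl; rewrite /l; lra.
    have h5 : b * (15 * b / 8 + 5 * g / 4) = 0 by rewrite L0 mulr0.
    have h6 : g * (15 * b / 8 + 5 * g / 4) = 0 by rewrite L0 mulr0.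
    have hb0 : b = 0 by move: h5 h6 Eq0 Ev0; rewrite /EqL /EvL; lra.
    have hg0 : g = 0 by move: h5 h6 Eq0 Ev0; rewrite /EqL /EvL; lra.
    subst b g.
    left; do 3 (split; first by []); split; first by lra.
    have : (s - 1/2) * (s + 1/2) = 0 by lra.
    by move/prod0_2 => [h'|h']; [left|right]; lra.
  + have hl : l = 2 by lra.
    by split; [do 3 right; left | move=> h'; exfalso; lra].
  + have hl : l = 3 by lra.
    by split; [do 5 right; left | move=> h'; exfalso; lra].
-
  have h1 : 2 * a + b / 8 + 3 * g / 4 - 1 = 0.
    by move: Ed => /prod0_2 [h|h]; [move: s0; rewrite h eqxx | ].
  have h2 : a / 8 + 2 * b + 3 * g / 4 - 1 = 0.
    by move: Eg => /prod0_2 [h|h]; [move: t0; rewrite h eqxx | ].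
  have hb : b = a by lra.
  have hg : g = 4/3 - 17 * a / 6 by lra.
  subst b g.
  have : (a - 4/7) * (a - 8/35) = 0 by lra.
  move/prod0_2 => [h|h].
  + have hl : l = 12/7 by rewrite /l; lra.
    by split; [do 2 right; left | move=> h'; exfalso; lra].
  + have hl : l = 16/7 by rewrite /l; lra.
    by split; [do 4 right; left | move=> h'; exfalso; lra].
Qed.
End Arith.

End B.
Import B.

Module C.
Set Implicit Arguments. Unset Strict Implicit. Unset Printing Implicit Defensive.
Local Open Scope ring_scope.
Section C.
Variable R : realType.
Local Notation V := (V4A R).
Local Notation mul := (@v4a_mul R).
Local Notation one := (@A.one R).
Local Notation ax0 := (@A.ax0 R).
Local Notation ax1 := (@A.ax1 R).
Local Notation ax2 := (@A.ax2 R).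
Local Notation ax3 := (@A.ax3 R).
Local Notation vv := (@A.vv R).
Local Notation idem := (@Defs.idempotent R).

Lemma idem_data (x : V) : idem x ->
  (ell x = 0 \/ ell x = 1 \/ ell x = 12/7 \/ ell x = 2 \/ ell x = 16/7 \/ ell x = 3 \/ ell x = 4) /\
  (ell x = 1 -> ((x 0 i1 + x 0 i3) / 2 = 0 /\ x 0 i4 = 0 /\ (x 0 i1 - x 0 i3) / 2 = 0 /\
                  (x 0 i0 + x 0 i2) / 2 = 1 / 2 /\
                  ((x 0 i0 - x 0 i2) / 2 = 1 / 2 \/ (x 0 i0 - x 0 i2) / 2 = - (1 / 2))) \/
                 ((x 0 i0 + x 0 i2) / 2 = 0 /\ x 0 i4 = 0 /\ (x 0 i0 - x 0 i2) / 2 = 0 /\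
                  (x 0 i1 + x 0 i3) / 2 = 1 / 2 /\
                  ((x 0 i1 - x 0 i3) / 2 = 1 / 2 \/ (x 0 i1 - x 0 i3) / 2 = - (1 / 2)))).
Proof.
rewrite /Defs.idempotent => H.
set a := (x 0 i0 + x 0 i2) / 2; set b := (x 0 i1 + x 0 i3) / 2.
set g := x 0 i4; set s := (x 0 i0 - x 0 i2) / 2; set t := (x 0 i1 - x 0 i3) / 2.
have e0 := congr1 (fun z : V => z 0 i0) H; have e1 := congr1 (fun z : V => z 0 i1) H.
have e2 := congr1 (fun z : V => z 0 i2) H; have e3 := congr1 (fun z : V => z 0 i3) H.
have e4 := congr1 (fun z : V => z 0 i4) H.
move: e0 e1 e2 e3 e4 => /=; rewrite mulE0 mulE1 mulE2 mulE3 mulE4 /P0 /P1 /P2 /P3 /P4.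
move=> e0 e1 e2 e3 e4.
have Ep : a ^+ 2 + a * b / 4 + a * g / 2 - b * g / 2 + s ^+ 2 = a.
  rewrite /a /b /g /s; lra.
have Eq : b ^+ 2 + a * b / 4 - a * g / 2 + b * g / 2 + t ^+ 2 = b.
  rewrite /a /b /g /t; lra.
have Ev : g ^+ 2 - 3 * a * b / 8 + 3 * a * g / 4 + 3 * b * g / 4 = g.
  rewrite /a /b /g; lra.
have Ed : s * (2 * a + b / 8 + 3 * g / 4 - 1) = 0.
  rewrite /a /b /g /s; lra.
have Eg : t * (a / 8 + 2 * b + 3 * g / 4 - 1) = 0.
  rewrite /a /b /g /t; lra.
have hl : ell x = 2 * (a + b + g) by rewrite /ell /a /b /g; lra.
rewrite hl; move: (@idem_cases R a b g s t Ep Eq Ev Ed Eg) => /= [h1 h2]; split; first exact: h1.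
exact: h2.
Qed.

End C.

End C.
Import C.

Module D.
Set Implicit Arguments. Unset Strict Implicit. Unset Printing Implicit Defensive.
Local Open Scope ring_scope.
Section D.
Variable R : realType.
Local Notation V := (V4A R).
Local Notation mul := (@v4a_mul R).
Local Notation one := (@A.one R).
Local Notation ax0 := (@A.ax0 R).
Local Notation ax1 := (@A.ax1 R).
Local Notation ax2 := (@A.ax2 R).
Local Notation ax3 := (@A.ax3 R).
Local Notation vv := (@A.vv R).
Local Notation idem := (@Defs.idempotent R).

Lemma idem_ell1 (x : V) : idem x -> ell x = 1 ->
  [\/ x = ax0, x = ax1, x = ax2 | x = ax3].
Proof.
move=> hx h1; have [_ h] := idem_data hx.
case: (h h1) => [[hb [hg [ht [ha [hs|hs]]]]]|[ha [hg [hs [hb [ht|ht]]]]]].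
- by apply: Or41; apply: rowP5; rewrite /A.ax0 !mxE /=; lra.
- by apply: Or43; apply: rowP5; rewrite /A.ax2 !mxE /=; lra.
- by apply: Or42; apply: rowP5; rewrite /A.ax1 !mxE /=; lra.
- by apply: Or44; apply: rowP5; rewrite /A.ax3 !mxE /=; lra.
Qed.

Lemma ell_idem (x : V) : idem x -> ell x = Qf x.
Proof. by move=> hx; rewrite -ell_sq hx. Qed.

Lemma ell_idem_gt0 (x : V) : idem x -> x != 0 -> 0 < ell x.
Proof. by move=> hx nx; rewrite ell_idem // Qf_gt0. Qed.

Lemma ax_pair (e f : V) : idem e -> idem f -> ell e = 1 -> ell f = 1 -> mul e f = 0 ->
  (e = ax0 /\ f = ax2) \/ (e = ax2 /\ f = ax0) \/ (e = ax1 /\ f = ax3) \/ (e = ax3 /\ f = ax1).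
Proof.
move=> he hf le lf hef.
have := congr1 (@ell R) hef.
case: (idem_ell1 he le) => ->; case: (idem_ell1 hf lf) => ->;
  rewrite /ell !(mulE0, mulE1, mulE2, mulE3, mulE4) /P0 /P1 /P2 /P3 /P4
    /A.ax0 /A.ax1 /A.ax2 /A.ax3 !mxE /= => h;
  first [ by exfalso; lra | by left | by right; left | by right; right; left | by right; right; right].
Qed.

End D.

End D.
Import D.

Module E.
Set Implicit Arguments. Unset Strict Implicit. Unset Printing Implicit Defensive.
Local Open Scope ring_scope.
Section E.
Variable R : realType.
Local Notation V := (V4A R).
Local Notation mul := (@v4a_mul R).
Local Notation one := (@A.one R).
Local Notation ax0 := (@A.ax0 R).
Local Notation ax1 := (@A.ax1 R).
Local Notation ax2 := (@A.ax2 R).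
Local Notation ax3 := (@A.ax3 R).
Local Notation vv := (@A.vv R).
Local Notation idem := (@Defs.idempotent R).

Lemma triple_ell (e1 e2 e3 : V) : idem e1 -> idem e2 -> idem e3 ->
  e1 != 0 -> e2 != 0 -> e3 != 0 -> e1 + e2 + e3 = one ->
  (ell e1 = 1 /\ ell e2 = 1) \/ (ell e1 = 1 /\ ell e3 = 1) \/ (ell e2 = 1 /\ ell e3 = 1).
Proof.
move=> h1 h2 h3 n1 n2 n3 hs.
have hsum : ell e1 + ell e2 + ell e3 = 4 by rewrite -ell_one -hs !ellD.
have p1 := ell_idem_gt0 h1 n1; have p2 := ell_idem_gt0 h2 n2; have p3 := ell_idem_gt0 h3 n3.
have [d1 _] := idem_data h1; have [d2 _] := idem_data h2; have [d3 _] := idem_data h3.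
move: hsum p1 p2 p3.
case: d1 => [->|[->|[->|[->|[->|[->|->]]]]]];
case: d2 => [->|[->|[->|[->|[->|[->|->]]]]]];
case: d3 => [->|[->|[->|[->|[->|[->|->]]]]]] => hs' q1 q2 q3;
first [ by exfalso; clear -hs' q1 q2 q3; lra | by left | by right; left | by right; right ].
Qed.

Lemma triple_axes (e1 e2 e3 : V) : idem e1 -> idem e2 -> idem e3 ->
  e1 != 0 -> e2 != 0 -> e3 != 0 -> e1 + e2 + e3 = one ->
  mul e1 e2 = 0 -> mul e1 e3 = 0 -> mul e2 e3 = 0 ->
  exists f1 f2, [/\ f1 \in [:: e1; e2; e3], f2 \in [:: e1; e2; e3] &
     ((f1 = ax0 /\ f2 = ax2) \/ (f1 = ax1 /\ f2 = ax3))].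
Proof.
move=> h1 h2 h3 n1 n2 n3 hs m12 m13 m23.
have key : forall e f : V, idem e -> idem f -> ell e = 1 -> ell f = 1 -> mul e f = 0 ->
  e \in [:: e1; e2; e3] -> f \in [:: e1; e2; e3] ->
  exists f1 f2, [/\ f1 \in [:: e1; e2; e3], f2 \in [:: e1; e2; e3] &
     ((f1 = ax0 /\ f2 = ax2) \/ (f1 = ax1 /\ f2 = ax3))].
  move=> e f he hf le lf hef ie jf.
  case: (ax_pair he hf le lf hef) => [[E F]|[[E F]|[[E F]|[E F]]]]; subst e f.
  - by exists ax0, ax2; split => //; left.
  - by exists ax0, ax2; split => //; left.
  - by exists ax1, ax3; split => //; right.
  - by exists ax1, ax3; split => //; right.
case: (triple_ell h1 h2 h3 n1 n2 n3 hs) => [[l1 l2]|[[l1 l3]|[l2 l3]]].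
- by apply: (key e1 e2) => //; rewrite !inE eqxx ?orbT.
- by apply: (key e1 e3) => //; rewrite !inE eqxx ?orbT.
- by apply: (key e2 e3) => //; rewrite !inE eqxx ?orbT.
Qed.

End E.

End E.
Import E.

Module F.
Set Implicit Arguments. Unset Strict Implicit. Unset Printing Implicit Defensive.
Local Open Scope ring_scope.
Section F.
Variable R : realType.
Local Notation V := (V4A R).
Local Notation mul := (@v4a_mul R).
Local Notation one := (@A.one R).
Local Notation ax0 := (@A.ax0 R).
Local Notation ax1 := (@A.ax1 R).
Local Notation ax2 := (@A.ax2 R).
Local Notation ax3 := (@A.ax3 R).
Local Notation vv := (@A.vv R).
Local Notation idem := (@Defs.idempotent R).

Lemma span2P (a b z : V) : z \in <<[:: a; b]>>%VS -> exists k1 k2, z = k1 *: a + k2 *: b.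
Proof.
rewrite span_cons span_seq1 => /memv_addP [y hy [w hw ->]].
by case/vlineP: hy => k1 ->; case/vlineP: hw => k2 ->; exists k1, k2.
Qed.

Lemma mem_span2 (a b : V) k1 k2 : k1 *: a + k2 *: b \in <<[:: a; b]>>%VS.
Proof. by rewrite memvD // memvZ // memv_span // !inE eqxx ?orbT. Qed.

Lemma span3P (a b c z : V) : z \in <<[:: a; b; c]>>%VS ->
  exists k1 k2 k3, z = k1 *: a + k2 *: b + k3 *: c.
Proof.
rewrite span_cons => /memv_addP [y hy [w /span2P [k2 [k3 ->]] ->]].
by case/vlineP: hy => k1 ->; exists k1, k2, k3; rewrite addrA.
Qed.

Lemma mem_span3 (a b c : V) k1 k2 k3 : k1 *: a + k2 *: b + k3 *: c \in <<[:: a; b; c]>>%VS.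
Proof. by rewrite !memvD // memvZ // memv_span // !inE eqxx ?orbT. Qed.

Lemma prod2 (e f : V) k1 k2 l1 l2 : idem e -> idem f -> mul e f = 0 ->
  mul (k1 *: e + k2 *: f) (l1 *: e + l2 *: f) = (k1 * l1) *: e + (k2 * l2) *: f.
Proof.
move=> he hf hef.
rewrite A.vmulDl !A.vmulDr !A.vmulZl !A.vmulZr (A.vmulC f e) hef he hf.
by apply: rowP5; rewrite !mxE /=; ring.
Qed.

Lemma prod3 (e f g : V) k1 k2 k3 l1 l2 l3 : idem e -> idem f -> idem g ->
  mul e f = 0 -> mul e g = 0 -> mul f g = 0 ->
  mul (k1 *: e + k2 *: f + k3 *: g) (l1 *: e + l2 *: f + l3 *: g) =
    (k1 * l1) *: e + (k2 * l2) *: f + (k3 * l3) *: g.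
Proof.
move=> he hf hg hef heg hfg.
rewrite !A.vmulDl !A.vmulDr !A.vmulZl !A.vmulZr (A.vmulC f e) (A.vmulC g e) (A.vmulC g f) hef heg hfg he hf hg.
by apply: rowP5; rewrite !mxE /=; ring.
Qed.

Lemma assoc2 (e f : V) : idem e -> idem f -> mul e f = 0 ->
  is_assoc_subalgebra <<[:: e; f]>>%VS.
Proof.
move=> he hf hef; split.
  move=> x y /span2P [k1 [k2 ->]] /span2P [l1 [l2 ->]].
  by rewrite prod2 // mem_span2.
move=> x y z /span2P [k1 [k2 ->]] /span2P [l1 [l2 ->]] /span2P [m1 [m2 ->]].
by rewrite !prod2 // !mulrA.
Qed.

Lemma assoc3 (e f g : V) : idem e -> idem f -> idem g ->
  mul e f = 0 -> mul e g = 0 -> mul f g = 0 ->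
  is_assoc_subalgebra <<[:: e; f; g]>>%VS.
Proof.
move=> he hf hg hef heg hfg; split.
  move=> x y /span3P [k1 [k2 [k3 ->]]] /span3P [l1 [l2 [l3 ->]]].
  by rewrite prod3 // mem_span3.
move=> x y z /span3P [k1 [k2 [k3 ->]]] /span3P [l1 [l2 [l3 ->]]] /span3P [m1 [m2 [m3 ->]]].
by rewrite !prod3 // !mulrA.
Qed.

End F.

End F.
Import F.

Module G.
Set Implicit Arguments. Unset Strict Implicit. Unset Printing Implicit Defensive.
Local Open Scope ring_scope.
Section G.
Variable R : realType.
Local Notation V := (V4A R).
Local Notation mul := (@v4a_mul R).
Local Notation one := (@A.one R).
Local Notation ax0 := (@A.ax0 R).
Local Notation ax1 := (@A.ax1 R).
Local Notation ax2 := (@A.ax2 R).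
Local Notation ax3 := (@A.ax3 R).
Local Notation vv := (@A.vv R).
Local Notation idem := (@Defs.idempotent R).

Lemma neg_contra (D qe qn : R) : D < 0 -> 0 < qe -> 0 <= qn -> D * qe = qn -> False.
Proof. move=> *; nra. Qed.

Lemma quad (e u : V) a b : idem e -> e != 0 -> mul e u = u -> u \notin <[e]>%VS ->
  mul u u = a *: u + b *: e ->
  exists c1 c2, [/\ idem (c1 *: e + c2 *: u), c1 *: e + c2 *: u != 0,
                    c1 *: e + c2 *: u != e & mul e (c1 *: e + c2 *: u) = c1 *: e + c2 *: u].
Proof.
move=> he ne heu hu huu.
pose n := u - (a / 2) *: e.
have hee : mul e e = e := he.
have hen : mul e n = n by rewrite /n A.vmulBr A.vmulZr heu hee.
pose D := b + a ^+ 2 / 4.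
have hnn : mul n n = D *: e.
  rewrite /n A.vmulBl !A.vmulBr !A.vmulZl !A.vmulZr (A.vmulC u e) heu huu hee /D.
  by apply: rowP5; rewrite !mxE /=; field.
have hQ := ell_sq n; rewrite hnn ellZ (ell_idem he) in hQ.
have Qe := Qf_gt0 ne; have Qn := Qf_ge0 n.
have hue : forall k, u = k *: e -> False.
  by move=> k hk; move: hu; rewrite hk memvZ ?memv_line.
case: (ltrgtP D 0) => hD.
- by exfalso; apply: (neg_contra hD Qe Qn hQ).
- set r := Num.sqrt D.
  have r0 : 0 < r by rewrite sqrtr_gt0.
  have r2 : r ^+ 2 = D by rewrite sqr_sqrtr // ltW.
  have rn0 : r != 0 by rewrite gt_eqF.
  rewrite -r2 in hnn.
  exists (1 / 2 - a / (4 * r)), (1 / (2 * r)).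
  have hx : (1 / 2 - a / (4 * r)) *: e + (1 / (2 * r)) *: u = (1/2) *: e + (1 / (2 * r)) *: n.
    by apply: rowP5; rewrite /n !mxE /=; field.
  have hux : forall x : V, x = (1/2) *: e + (1 / (2 * r)) *: n -> u = (a / 2 - r) *: e + (2 * r) *: x.
    by move=> x ->; apply: rowP5; rewrite /n !mxE /=; field.
  rewrite hx; split.
  + rewrite /Defs.idempotent A.vmulDl !A.vmulDr !A.vmulZl !A.vmulZr (A.vmulC n e) hen hee hnn.
    by apply: rowP5; rewrite !mxE /=; field.
  + apply/eqP => h0; apply: (hue (a / 2 - r)).
    by rewrite (hux _ (esym h0)) scaler0 addr0.
  + apply/eqP => h0; apply: (hue (a / 2 + r)).
    rewrite (hux _ (esym h0)); apply: rowP5; rewrite !mxE /=; ring.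
  + rewrite A.vmulDr !A.vmulZr hee hen //.
- have n0 : n = 0 by apply: Qf_eq0; rewrite -hQ hD mul0r.
  exfalso; apply: (hue (a / 2)).
  by move: n0; rewrite /n => /subr0_eq.
Qed.

End G.

End G.
Import G.

Module H.
Set Implicit Arguments. Unset Strict Implicit. Unset Printing Implicit Defensive.
Local Open Scope ring_scope.
Section H.
Variable R : realType.
Local Notation V := (V4A R).
Local Notation mul := (@v4a_mul R).
Local Notation one := (@A.one R).
Local Notation ax0 := (@A.ax0 R).
Local Notation ax1 := (@A.ax1 R).
Local Notation ax2 := (@A.ax2 R).
Local Notation ax3 := (@A.ax3 R).
Local Notation vv := (@A.vv R).
Local Notation idem := (@Defs.idempotent R).

Definition colv (c0 c1 c2 c3 c4 : R) : 'M[R]_(5, 1) :=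
  \matrix_(i < 5, j < 1) [:: c0; c1; c2; c3; c4]`_i.

Definition fM (M : 'M[R]_(5, 1)) : 'Hom(V, 'rV[R]_1) := linfun (mulmxr M).
Definition kerM (M : 'M[R]_(5, 1)) : {vspace V} := lker (fM M).

Lemma mem_kerM (M : 'M[R]_(5, 1)) z : (z \in kerM M) = (z *m M == 0).
Proof. by rewrite memv_ker /fM lfunE. Qed.

Lemma colvE (z : V) c0 c1 c2 c3 c4 :
  (z *m colv c0 c1 c2 c3 c4 == 0) =
  (c0 * z 0 i0 + c1 * z 0 i1 + c2 * z 0 i2 + c3 * z 0 i3 + c4 * z 0 i4 == 0).
Proof.
apply/eqP/eqP => [h | h].
  have := congr1 (fun A : 'M[R]_(1,1) => A 0 0) h; rewrite !mxE sum5 !mxE /=.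
  move=> hh; lra.
apply/rowP => j; rewrite !mxE sum5 !mxE /=; lra.
Qed.

Lemma dim_kerM (M : 'M[R]_(5, 1)) : (4 <= \dim (kerM M))%N.
Proof.
have h := limg_ker_dim (fM M) fullv.
rewrite capfv dimvf in h.
have h2 : (\dim (fM M @: fullv) <= 1)%N.
  by apply: leq_trans (dimvS (subvf _)) _; rewrite dimvf.
rewrite /kerM; move: h h2; rewrite /dim /= mul1n.
set d1 := \dim (lker _); set d2 := \dim (limg _) => h h2.
by rewrite -(leq_add2r d2) h (leq_trans (leq_add (leqnn 4%N) h2)).

Qed.


Lemma kerMP (z : V) c0 c1 c2 c3 c4 :
  reflect (c0 * z 0 i0 + c1 * z 0 i1 + c2 * z 0 i2 + c3 * z 0 i3 + c4 * z 0 i4 = 0)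
          (z \in kerM (colv c0 c1 c2 c3 c4)).
Proof. by rewrite mem_kerM colvE; apply: eqP. Qed.

Definition Wsig := kerM (colv 1 0 (-1) 0 0).
Definition Wtau := kerM (colv 0 1 0 (-1) 0).
Definition K1 := kerM (colv 0 1 0 0 (-2)).
Definition K2 := kerM (colv 1 0 0 0 (-2)).
Definition S1 : {vspace V} := <<[:: ax0; ax2; one - ax0 - ax2]>>%VS.
Definition S2 : {vspace V} := <<[:: ax1; ax3; one - ax1 - ax3]>>%VS.
Definition pp : V := ax0 + ax2.
Definition qq : V := ax1 + ax3.
Definition Bsp : {vspace V} := <<[:: pp; qq; vv]>>%VS.

Lemma memWsigP (z : V) : reflect (z 0 i0 = z 0 i2) (z \in Wsig).
Proof. by apply: (iffP (kerMP _ _ _ _ _ _)) => h; lra. Qed.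
Lemma memWtauP (z : V) : reflect (z 0 i1 = z 0 i3) (z \in Wtau).
Proof. by apply: (iffP (kerMP _ _ _ _ _ _)) => h; lra. Qed.
Lemma memK1P (z : V) : reflect (z 0 i1 = 2 * z 0 i4) (z \in K1).
Proof. by apply: (iffP (kerMP _ _ _ _ _ _)) => h; lra. Qed.
Lemma memK2P (z : V) : reflect (z 0 i0 = 2 * z 0 i4) (z \in K2).
Proof. by apply: (iffP (kerMP _ _ _ _ _ _)) => h; lra. Qed.

Lemma Wsig_sub : is_subalgebra Wsig.
Proof.
move=> x y /memWsigP hx /memWsigP hy; apply/memWsigP.
by rewrite mulE0 mulE2 /P0 /P2 hx hy; ring.
Qed.

Lemma Wtau_sub : is_subalgebra Wtau.
Proof.
move=> x y /memWtauP hx /memWtauP hy; apply/memWtauP.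
by rewrite mulE1 mulE3 /P1 /P3 hx hy; ring.
Qed.

Lemma dim_Wsig : (4 <= \dim Wsig)%N. Proof. exact: dim_kerM. Qed.
Lemma dim_Wtau : (4 <= \dim Wtau)%N. Proof. exact: dim_kerM. Qed.

Lemma cap_Bsp : (Wsig :&: Wtau <= Bsp)%VS.
Proof.
apply/subvP => z /memv_capP [/memWsigP h1 /memWtauP h2].
have -> : z = z 0 i0 *: pp + z 0 i1 *: qq + z 0 i4 *: vv.
  by apply: rowP5; rewrite /pp /qq /A.ax0 /A.ax1 /A.ax2 /A.ax3 /A.vv !mxE /=; lra.
exact: mem_span3.
Qed.

Lemma dim_Bsp : (\dim Bsp <= 3)%N. Proof. exact: dim_span. Qed.

Lemma Wsig_le : (\dim Wsig <= 4)%N.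
Proof.
apply: (@leq_trans (\dim <<[:: pp; ax1; ax3; vv]>>%VS)); last exact: dim_span.
apply: dimvS; apply/subvP => z /memWsigP h.
have -> : z = z 0 i0 *: pp + z 0 i1 *: ax1 + z 0 i3 *: ax3 + z 0 i4 *: vv.
  by apply: rowP5; rewrite /pp /A.ax0 /A.ax1 /A.ax2 /A.ax3 /A.vv !mxE /=; lra.
by rewrite !memvD // memvZ // memv_span // !inE eqxx ?orbT.
Qed.

Lemma Wtau_le : (\dim Wtau <= 4)%N.
Proof.
apply: (@leq_trans (\dim <<[:: ax0; qq; ax2; vv]>>%VS)); last exact: dim_span.
apply: dimvS; apply/subvP => z /memWtauP h.
have -> : z = z 0 i0 *: ax0 + z 0 i1 *: qq + z 0 i2 *: ax2 + z 0 i4 *: vv.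
  by apply: rowP5; rewrite /qq /A.ax0 /A.ax1 /A.ax2 /A.ax3 /A.vv !mxE /=; lra.
by rewrite !memvD // memvZ // memv_span // !inE eqxx ?orbT.
Qed.

Lemma nonassoc : mul (mul pp qq) vv != mul pp (mul qq vv).
Proof.
apply/eqP => /(congr1 (fun z : V => z 0 i4)).
rewrite /pp /qq /A.ax0 /A.ax1 /A.ax2 /A.ax3 /A.vv
  !(mulE0, mulE1, mulE2, mulE3, mulE4, mxE) /P0 /P1 /P2 /P3 /P4 /=.
move=> h; lra.
Qed.

Lemma Bsp_notin (U : {vspace V}) : is_assoc_subalgebra U ->
  pp \in U -> qq \in U -> vv \in U -> False.
Proof.
move=> [_ hU] hp hq hv.
by move: nonassoc; rewrite hU // eqxx.
Qed.

Lemma pp_Wsig : pp \in Wsig. Proof. apply/memWsigP; rewrite /pp /A.ax0 /A.ax2 !mxE /=; lra. Qed.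
Lemma qq_Wsig : qq \in Wsig. Proof. apply/memWsigP; rewrite /qq /A.ax1 /A.ax3 !mxE /=; lra. Qed.
Lemma vv_Wsig : vv \in Wsig. Proof. apply/memWsigP; rewrite /A.vv !mxE /=; lra. Qed.
Lemma pp_Wtau : pp \in Wtau. Proof. apply/memWtauP; rewrite /pp /A.ax0 /A.ax2 !mxE /=; lra. Qed.
Lemma qq_Wtau : qq \in Wtau. Proof. apply/memWtauP; rewrite /qq /A.ax1 /A.ax3 !mxE /=; lra. Qed.
Lemma vv_Wtau : vv \in Wtau. Proof. apply/memWtauP; rewrite /A.vv !mxE /=; lra. Qed.

Lemma ax0_Wsig : ax0 \notin Wsig.
Proof. by apply/memWsigP; rewrite /A.ax0 !mxE /=; lra. Qed.
Lemma ax1_Wtau : ax1 \notin Wtau.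
Proof. by apply/memWtauP; rewrite /A.ax1 !mxE /=; lra. Qed.

Lemma S2_Wsig : (S2 <= Wsig)%VS.
Proof.
apply/span_subvP => z; rewrite !inE => /or3P [] /eqP -> ; apply/memWsigP;
  rewrite /A.one /A.ax1 /A.ax3 !mxE /=; lra.
Qed.
Lemma S1_Wtau : (S1 <= Wtau)%VS.
Proof.
apply/span_subvP => z; rewrite !inE => /or3P [] /eqP -> ; apply/memWtauP;
  rewrite /A.one /A.ax0 /A.ax2 !mxE /=; lra.
Qed.
Lemma S1_K1 : (S1 <= K1)%VS.
Proof.
apply/span_subvP => z; rewrite !inE => /or3P [] /eqP -> ; apply/memK1P;
  rewrite /A.one /A.ax0 /A.ax2 !mxE /=; lra.
Qed.
Lemma S2_K2 : (S2 <= K2)%VS.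
Proof.
apply/span_subvP => z; rewrite !inE => /or3P [] /eqP -> ; apply/memK2P;
  rewrite /A.one /A.ax1 /A.ax3 !mxE /=; lra.
Qed.

End H.

End H.
Import H.

Module I.
Set Implicit Arguments. Unset Strict Implicit. Unset Printing Implicit Defensive.
Local Open Scope ring_scope.
Section I.
Variable R : realType.
Local Notation V := (V4A R).
Local Notation mul := (@v4a_mul R).
Local Notation one := (@A.one R).
Local Notation ax0 := (@A.ax0 R).
Local Notation ax1 := (@A.ax1 R).
Local Notation ax2 := (@A.ax2 R).
Local Notation ax3 := (@A.ax3 R).
Local Notation vv := (@A.vv R).
Local Notation idem := (@Defs.idempotent R).

Lemma dimV_le (X : {vspace V}) : (\dim X <= 5)%N.
Proof. by apply: leq_trans (dimvS (subvf X)) _; rewrite dimvf /dim /= mul1n. Qed.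

Lemma one_neq0 : one != 0 :> V.
Proof. by apply/eqP => /(congr1 (fun z : V => z 0 i0)); rewrite /A.one !mxE /=; lra. Qed.

Lemma dim_orth2 (e f : V) : idem e -> idem f -> e != 0 -> f != 0 -> mul e f = 0 ->
  \dim <<[:: e; f]>>%VS = 2%N.
Proof.
move=> he hf ne nf hef; apply/eqP; change (free [:: e; f]).
rewrite free_cons seq1_free nf andbT span_seq1.
apply/vlineP => [[k hk]]; move: ne; rewrite -he {2}hk A.vmulZr hef scaler0 eqxx.
by [].
Qed.

Lemma dim_orth3 (e1 e2 e3 : V) : idem e1 -> idem e2 -> idem e3 ->
  e1 != 0 -> e2 != 0 -> e3 != 0 ->
  mul e1 e2 = 0 -> mul e1 e3 = 0 -> mul e2 e3 = 0 ->
  \dim <<[:: e1; e2; e3]>>%VS = 3%N.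
Proof.
move=> h1 h2 h3 n1 n2 n3 m12 m13 m23; apply/eqP; change (free [:: e1; e2; e3]).
rewrite free_cons; apply/andP; split; last first.
  by apply/eqP; apply: dim_orth2.
apply/negP => /span2P [k2 [k3 hk]].
by move: n1; rewrite -h1 {2}hk A.vmulDr !A.vmulZr m12 m13 !scaler0 addr0 eqxx.
Qed.

Lemma idem_not_line (x : V) : idem x -> x != 0 -> x != one -> x \notin <[one]>%VS.
Proof.
move=> hx n0 n1; apply/vlineP => [[k hk]].
have : (k ^+ 2 - k) *: one = 0.
  rewrite scalerBl -hk.
  have : mul x x = x := hx.
  rewrite {1 2}hk A.vmulZl A.vmulZr one_mul scalerA -expr2 => ->.
  by rewrite subrr.
move/eqP; rewrite scaler_eq0 (negbTE one_neq0) orbF => /eqP hk2.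
have : k * (k - 1) = 0 by rewrite mulrBr mulr1 -expr2.
move/prod0_2 => [k0|k1].
  by move: n0; rewrite hk k0 scale0r eqxx.
have k1' : k = 1 by lra.
by move: n1; rewrite hk k1' scale1r eqxx.
Qed.

Lemma triple_from (X F : V) : idem X -> idem F -> mul X F = F ->
  [/\ idem (X - F), idem (one - X), mul F (X - F) = 0, mul F (one - X) = 0 &
      mul (X - F) (one - X) = 0].
Proof.
move=> hX hF hXF.
have hX' : mul X X = X := hX.
have hF' : mul F F = F := hF.
have hFX : mul F X = F by rewrite A.vmulC.
split.
- rewrite /Defs.idempotent A.vmulBl !A.vmulBr hX' hF' hXF hFX.
  by apply: rowP5; rewrite !mxE /=; ring.
- rewrite /Defs.idempotent A.vmulBl !A.vmulBr !one_mul !mul_one hX'.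
  by apply: rowP5; rewrite !mxE /=; ring.
- by rewrite A.vmulBr hF' hFX subrr.
- by rewrite A.vmulBr mul_one hFX subrr.
- rewrite A.vmulBl !A.vmulBr !mul_one hX' hFX.
  by apply: rowP5; rewrite !mxE /=; ring.
Qed.

Lemma assoc_add_one (U : {vspace V}) : is_assoc_subalgebra U ->
  is_assoc_subalgebra (U + <[one]>)%VS.
Proof.
move=> [hU1 hU2].
have expand : forall (u : V) k y, mul (u + k *: one) y = mul u y + k *: y.
  by move=> u k y; rewrite A.vmulDl A.vmulZl one_mul.
have expand' : forall (u : V) k y, mul y (u + k *: one) = mul y u + k *: y.
  by move=> u k y; rewrite A.vmulDr A.vmulZr mul_one.
split.
  move=> x y /memv_addP [u hu [o /vlineP [k ->] ->]] /memv_addP [u' hu' [o' /vlineP [k' ->] ->]].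
  rewrite expand expand'.
  have -> : mul u u' + k' *: u + k *: (u' + k' *: one) =
            (mul u u' + k' *: u + k *: u') + (k * k') *: one.
    by rewrite scalerDr scalerA !addrA.
  by apply: memv_add; [rewrite !memvD ?memvZ ?hU1 | apply: memvZ; apply: memv_line].
move=> x y z /memv_addP [u hu [o /vlineP [k ->] ->]]
  /memv_addP [u' hu' [o' /vlineP [k' ->] ->]] /memv_addP [u'' hu'' [o'' /vlineP [k'' ->] ->]].
rewrite !(expand, expand', A.vmulDl, A.vmulDr, A.vmulZl, A.vmulZr, one_mul, mul_one) hU2 //.
by freeze; apply: rowP5; rewrite !mxE /=; ring.
Qed.

Lemma max_one (U : {vspace V}) : is_max_assoc_subalgebra U -> one \in U.
Proof.
move=> [hU hmax].
have := hmax _ (assoc_add_one hU) (addvSl _ _) => <-.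
by apply: (subvP (addvSr U <[one]>%VS)); apply: memv_line.
Qed.

End I.

End I.
Import I.

Module J.
Set Implicit Arguments. Unset Strict Implicit. Unset Printing Implicit Defensive.
Local Open Scope ring_scope.
Section J.
Variable R : realType.
Local Notation V := (V4A R).
Local Notation mul := (@v4a_mul R).
Local Notation one := (@A.one R).
Local Notation ax0 := (@A.ax0 R).
Local Notation ax1 := (@A.ax1 R).
Local Notation ax2 := (@A.ax2 R).
Local Notation ax3 := (@A.ax3 R).
Local Notation vv := (@A.vv R).
Local Notation idem := (@Defs.idempotent R).

Lemma one_idem : idem one.
Proof. exact: one_mul. Qed.

Lemma exists_idem (U Hs : {vspace V}) : is_assoc_subalgebra U -> one \in U ->
  \dim U = 3%N -> is_subalgebra Hs -> (4 <= \dim Hs)%N -> one \in Hs -> ~~ (U <= Hs)%VS ->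
  exists x, [/\ x \in U, idem x, x != 0 & x != one].
Proof.
move=> [hU1 hU2] oU dU hH dH oH nUH.
set W := (U :&: Hs)%VS.
have dW : \dim W = 2%N.
  have h1 := dimv_sum_cap U Hs; have h2 := dimV_le (U + Hs).
  have h3 : \dim W != 3%N.
    have := dimv_leqif_sup (capvSl U Hs); rewrite -/W => /leqifP.
    rewrite subv_cap subvv /= (negbTE nUH) dU => hlt.
    by rewrite neq_ltn hlt.
  have h4 : (\dim W <= 3)%N by apply: leq_trans (dimvS (capvSl U Hs)) _; rewrite dU.
  rewrite -/W in h1.
  apply/eqP; rewrite eqn_leq; apply/andP; split.
    by rewrite leq_eqVlt (negbTE h3) /= ltnS in h4.
  rewrite -(leq_add2l (\dim (U + Hs))) h1 dU.
  by apply: leq_trans (leq_add h2 (leqnn 2%N)) _; apply: (leq_add (leqnn 3%N)).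
have oW : one \in W by rewrite memv_cap oU oH.
have : ~~ (W <= <[one]>)%VS.
  apply/negP => /dimvS; rewrite dW dim_vline one_neq0.
  by [].
case/subvPn => u uW uo.
have [uU uH] : u \in U /\ u \in Hs by apply/memv_capP.
have hsp : (W <= <<[:: u; one]>>)%VS.
  have sub : (<<[:: u; one]>> <= W)%VS.
    by apply/span_subvP => z; rewrite !inE => /orP [] /eqP ->.
  have d2 : \dim <<[:: u; one]>>%VS = 2%N.
    apply/eqP; change (free [:: u; one]).
    by rewrite free_cons seq1_free one_neq0 span_seq1 uo.
  have : (<<[:: u; one]>>%VS == W) by rewrite eqEdim sub dW d2 leqnn.
  by move/eqP => <-; apply: subvv.
have uu : mul u u \in W by rewrite memv_cap hU1 // hH.
have [a [b hab]] := span2P (subvP hsp _ uu).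
have [c1 [c2 [hi hn0 hne he]]] := quad (b := b) one_idem (one_neq0 R) (one_mul u) uo hab.
exists (c1 *: one + c2 *: u); split => //.
by rewrite memvD // memvZ.
Qed.


Lemma peirce3 (U : {vspace V}) (x : V) : is_assoc_subalgebra U -> one \in U ->
  \dim U = 3%N -> x \in U -> idem x -> x != 0 -> x != one ->
  exists X F, [/\ X \in U, F \in U, idem X, idem F &
                [/\ mul X F = F, F != 0, F != X & X != one]].
Proof.
move=> [hU1 hU2] oU dU xU hx nx0 nx1.
have hx' : mul x x = x := hx.
have nxl := idem_not_line hx nx0 nx1.
have : ~~ (U <= <<[:: x; one]>>)%VS.
  apply/negP => /dimvS; rewrite dU => h.
  by have := leq_trans h (dim_span [:: x; one]).
case/subvPn => w wU wn.
have hspan : (U <= <<[:: w; x; one]>>)%VS.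
  have sub : (<<[:: w; x; one]>> <= U)%VS.
    by apply/span_subvP => z; rewrite !inE => /or3P [] /eqP ->.
  have d3 : \dim <<[:: w; x; one]>>%VS = 3%N.
    apply/eqP; change (free [:: w; x; one]).
    by rewrite free_cons wn free_cons seq1_free one_neq0 span_seq1 nxl.
  have : (<<[:: w; x; one]>>%VS == U) by rewrite eqEdim sub dU d3 leqnn.
  by move/eqP => ->; apply: subvv.
have [w1 ew1] : exists w1, w1 = mul x w by exists (mul x w).
have w1U : w1 \in U by rewrite ew1 hU1.
have hxw1 : mul x w1 = w1.
  by have := hU2 x x w xU xU wU; rewrite hx' -ew1 => <-.
have [w0 ew0] : exists w0, w0 = w - w1 by exists (w - w1).
have w0U : w0 \in U by rewrite ew0 memvB.
have hxw0 : mul x w0 = 0 by rewrite ew0 A.vmulBr -ew1 hxw1 subrr.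
have [hw1|hw1] := boolP (w1 \in <[x]>%VS); last first.
  have [k1 [k2 [k3 hk]]] := span3P (subvP hspan _ (hU1 _ _ w1U w1U)).
  have hxsq : mul x (mul w1 w1) = mul w1 w1.
    by have := hU2 x w1 w1 xU w1U w1U; rewrite hxw1 => <-.
  have hsq : mul w1 w1 = k1 *: w1 + (k2 + k3) *: x.
    rewrite -hxsq hk !A.vmulDr !A.vmulZr hx' mul_one -ew1.
    by apply: rowP5; rewrite !mxE /=; ring.
  have [c1 [c2 [hi hn0 hne he]]] := quad hx nx0 hxw1 hw1 hsq.
  exists x, (c1 *: x + c2 *: w1); split => //.
  by rewrite memvD // memvZ.
have [hw0|hw0] := boolP (w0 \in <[one - x]>%VS); last first.
  have eU : one - x \in U by rewrite memvB.
  have he : idem (one - x).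
    rewrite /Defs.idempotent A.vmulBl !A.vmulBr !one_mul !mul_one hx'.
    by apply: rowP5; rewrite !mxE /=; ring.
  have ne : one - x != 0 by rewrite subr_eq0 eq_sym.
  have hew0 : mul (one - x) w0 = w0 by rewrite A.vmulBl one_mul hxw0 subr0.
  have [k1 [k2 [k3 hk]]] := span3P (subvP hspan _ (hU1 _ _ w0U w0U)).
  have hesq : mul (one - x) (mul w0 w0) = mul w0 w0.
    by have := hU2 _ _ _ eU w0U w0U; rewrite hew0 => <-.
  have hsq : mul w0 w0 = k1 *: w0 + k3 *: (one - x).
    rewrite -hesq hk !A.vmulDr !A.vmulZr mul_one.
    rewrite A.vmulBl one_mul -ew1 A.vmulBl one_mul hx' subrr scaler0 addr0 -ew0.
    by [].
  have [c1 [c2 [hi hn0 hne hef]]] := quad he ne hew0 hw0 hsq.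
  exists (one - x), (c1 *: (one - x) + c2 *: w0); split => //.
    by rewrite memvD // memvZ.
  split => //.
  by rewrite subr_eq addrC -subr_eq subrr eq_sym.
exfalso; move: wn; apply/negP/negPn.
case/vlineP: hw1 => k hk; case/vlineP: hw0 => k' hk'.
have -> : w = (k - k') *: x + k' *: one.
  have : w = w1 + w0 by rewrite ew0 addrC subrK.
  move=> ->; rewrite hk hk'.
  by apply: rowP5; rewrite !mxE /=; ring.
exact: mem_span2.
Qed.

End J.

End J.
Import J.

Module K.
Set Implicit Arguments. Unset Strict Implicit. Unset Printing Implicit Defensive.
Local Open Scope ring_scope.
Section K.
Variable R : realType.
Local Notation V := (V4A R).
Local Notation mul := (@v4a_mul R).
Local Notation one := (@A.one R).
Local Notation ax0 := (@A.ax0 R).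
Local Notation ax1 := (@A.ax1 R).
Local Notation ax2 := (@A.ax2 R).
Local Notation ax3 := (@A.ax3 R).
Local Notation vv := (@A.vv R).
Local Notation idem := (@Defs.idempotent R).
Local Notation S1 := (@H.S1 R).
Local Notation S2 := (@H.S2 R).
Local Notation Wsig := (@H.Wsig R).
Local Notation Wtau := (@H.Wtau R).
Local Notation Bsp := (@H.Bsp R).
Local Notation pp := (@H.pp R).
Local Notation qq := (@H.qq R).
Local Notation K1 := (@H.K1 R).
Local Notation K2 := (@H.K2 R).

Lemma idem_ax0 : idem ax0. Proof. by rewrite /Defs.idempotent; vcomp. Qed.
Lemma idem_ax1 : idem ax1. Proof. by rewrite /Defs.idempotent; vcomp. Qed.
Lemma idem_ax2 : idem ax2. Proof. by rewrite /Defs.idempotent; vcomp. Qed.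
Lemma idem_ax3 : idem ax3. Proof. by rewrite /Defs.idempotent; vcomp. Qed.
Lemma idem_c1 : idem (one - ax0 - ax2). Proof. by rewrite /Defs.idempotent; vcomp. Qed.
Lemma idem_c2 : idem (one - ax1 - ax3). Proof. by rewrite /Defs.idempotent; vcomp. Qed.
Lemma m02 : mul ax0 ax2 = 0. Proof. by vcomp. Qed.
Lemma m13 : mul ax1 ax3 = 0. Proof. by vcomp. Qed.
Lemma m0c : mul ax0 (one - ax0 - ax2) = 0. Proof. by vcomp. Qed.
Lemma m2c : mul ax2 (one - ax0 - ax2) = 0. Proof. by vcomp. Qed.
Lemma m1c : mul ax1 (one - ax1 - ax3) = 0. Proof. by vcomp. Qed.
Lemma m3c : mul ax3 (one - ax1 - ax3) = 0. Proof. by vcomp. Qed.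

Lemma vec_neq0 (x : V) k : x 0 k != 0 -> x != 0.
Proof. by apply: contra => /eqP ->; rewrite mxE. Qed.

Lemma ax0_n0 : ax0 != 0. Proof. by apply: (@vec_neq0 _ i0); rewrite /A.ax0 mxE /= oner_eq0. Qed.
Lemma ax1_n0 : ax1 != 0. Proof. by apply: (@vec_neq0 _ i1); rewrite /A.ax1 mxE /= oner_eq0. Qed.
Lemma ax2_n0 : ax2 != 0. Proof. by apply: (@vec_neq0 _ i2); rewrite /A.ax2 mxE /= oner_eq0. Qed.
Lemma ax3_n0 : ax3 != 0. Proof. by apply: (@vec_neq0 _ i3); rewrite /A.ax3 mxE /= oner_eq0. Qed.
Lemma c1_n0 : one - ax0 - ax2 != 0.
Proof.
apply: (@vec_neq0 _ i1); rewrite /A.one /A.ax0 /A.ax2 !mxE /=.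
by apply/eqP; lra.
Qed.
Lemma c2_n0 : one - ax1 - ax3 != 0.
Proof.
apply: (@vec_neq0 _ i0); rewrite /A.one /A.ax1 /A.ax3 !mxE /=.
by apply/eqP; lra.
Qed.

Lemma dim_S1 : \dim S1 = 3%N.
Proof. exact: (dim_orth3 idem_ax0 idem_ax2 idem_c1 ax0_n0 ax2_n0 c1_n0 m02 m0c m2c). Qed.
Lemma dim_S2 : \dim S2 = 3%N.
Proof. exact: (dim_orth3 idem_ax1 idem_ax3 idem_c2 ax1_n0 ax3_n0 c2_n0 m13 m1c m3c). Qed.

Lemma S1_assoc : is_assoc_subalgebra S1.
Proof. exact: (assoc3 idem_ax0 idem_ax2 idem_c1 m02 m0c m2c). Qed.
Lemma S2_assoc : is_assoc_subalgebra S2.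
Proof. exact: (assoc3 idem_ax1 idem_ax3 idem_c2 m13 m1c m3c). Qed.

Lemma one_Wsig : one \in Wsig. Proof. by apply/memWsigP; rewrite /A.one !mxE. Qed.
Lemma one_Wtau : one \in Wtau. Proof. by apply/memWtauP; rewrite /A.one !mxE. Qed.

Lemma S1_sub (U : {vspace V}) : one \in U -> ax0 \in U -> ax2 \in U -> (S1 <= U)%VS.
Proof.
move=> o a b; apply/span_subvP => z; rewrite !inE => /or3P [] /eqP -> //.
by rewrite !memvB.
Qed.
Lemma S2_sub (U : {vspace V}) : one \in U -> ax1 \in U -> ax3 \in U -> (S2 <= U)%VS.
Proof.
move=> o a b; apply/span_subvP => z; rewrite !inE => /or3P [] /eqP -> //.
by rewrite !memvB.
Qed.

Lemma eq_dim3 (U W : {vspace V}) : (W <= U)%VS -> \dim U = 3%N -> \dim W = 3%N -> U = W.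
Proof.
move=> WU dU dW; apply/eqP; rewrite eq_sym eqEdim WU dU dW leqnn.
by [].
Qed.

Lemma main3 (U : {vspace V}) : is_assoc_subalgebra U -> one \in U -> \dim U = 3%N ->
  U = S1 \/ U = S2.
Proof.
move=> hU oU dU.
have [x [xU hx nx0 nx1]] : exists x, [/\ x \in U, idem x, x != 0 & x != one].
  case: (boolP (U <= Wsig)%VS) => hs; last exact: exists_idem hU oU dU (@Wsig_sub R) (dim_Wsig R) one_Wsig hs.
  case: (boolP (U <= Wtau)%VS) => ht; last exact: exists_idem hU oU dU (@Wtau_sub R) (dim_Wtau R) one_Wtau ht.
  exfalso.
  have UB : (U <= Bsp)%VS.
    by apply: subv_trans (cap_Bsp R); rewrite subv_cap hs ht.
  have eUB : U = Bsp.
    apply/eqP; rewrite eqEdim UB dU (dim_Bsp R).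
    by [].
  apply: (Bsp_notin hU); rewrite eUB memv_span // !inE eqxx ?orbT //.
have [X [F [XU FU hX hF [hXF nF0 nFX nX1]]]] := peirce3 hU oU dU xU hx nx0 nx1.
have [t1 t2 t3 t4 t5] := triple_from hX hF hXF.
have n2 : X - F != 0 by rewrite subr_eq0 eq_sym.
have n3 : one - X != 0 by rewrite subr_eq0 eq_sym.
have hs : F + (X - F) + (one - X) = one by apply: rowP5; rewrite !mxE /=; ring.
have [f1 [f2 [i1 i2 hf]]] := triple_axes hF t1 t2 nF0 n2 n3 hs t3 t4 t5.
have inU : forall f, f \in [:: F; X - F; one - X] -> f \in U.
  by move=> f; rewrite !inE => /or3P [] /eqP ->; rewrite ?memvB.
case: hf => [[e1 e2]|[e1 e2]]; subst f1 f2.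
- by left; apply: eq_dim3 dU dim_S1; apply: S1_sub; [exact: oU | exact: inU i1 | exact: inU i2].
- by right; apply: eq_dim3 dU dim_S2; apply: S2_sub; [exact: oU | exact: inU i1 | exact: inU i2].
Qed.

End K.

End K.
Import K.

Module L.
Set Implicit Arguments. Unset Strict Implicit. Unset Printing Implicit Defensive.
Local Open Scope ring_scope.
Section L.
Variable R : realType.
Local Notation V := (V4A R).
Local Notation mul := (@v4a_mul R).
Local Notation one := (@A.one R).
Local Notation ax0 := (@A.ax0 R).
Local Notation ax1 := (@A.ax1 R).
Local Notation ax2 := (@A.ax2 R).
Local Notation ax3 := (@A.ax3 R).
Local Notation vv := (@A.vv R).
Local Notation idem := (@Defs.idempotent R).
Local Notation S1 := (@H.S1 R).
Local Notation S2 := (@H.S2 R).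
Local Notation Wsig := (@H.Wsig R).
Local Notation Wtau := (@H.Wtau R).
Local Notation Bsp := (@H.Bsp R).
Local Notation pp := (@H.pp R).
Local Notation qq := (@H.qq R).
Local Notation K1 := (@H.K1 R).
Local Notation K2 := (@H.K2 R).


Lemma assoc_cap (U W : {vspace V}) : is_assoc_subalgebra U -> is_subalgebra W ->
  is_assoc_subalgebra (U :&: W)%VS.
Proof.
move=> [hU1 hU2] hW; split.
  move=> x y /memv_capP [xU xW] /memv_capP [yU yW].
  by rewrite memv_cap hU1 // hW.
move=> x y z /memv_capP [xU _] /memv_capP [yU _] /memv_capP [zU _].
exact: hU2.
Qed.

Lemma cap_case (U W : {vspace V}) : is_assoc_subalgebra U -> one \in U -> (4 <= \dim U)%N ->
  is_subalgebra W -> (4 <= \dim W)%N -> (\dim W <= 4)%N -> one \in W ->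
  pp \in W -> qq \in W -> vv \in W ->
  (U :&: W)%VS = S1 \/ (U :&: W)%VS = S2.
Proof.
move=> hU oU dU hW dW1 dW2 oW pW qW vW.
have hc := assoc_cap hU hW.
have oc : one \in (U :&: W)%VS by rewrite memv_cap oU oW.
have h1 := dimv_sum_cap U W; have h2 := dimV_le (U + W).
have d3 : (3 <= \dim (U :&: W))%N.
  have : (8 <= \dim U + \dim W)%N by apply: (leq_add dU dW1).
  rewrite -h1 => h8.
  have : (8 <= 5 + \dim (U :&: W))%N by apply: leq_trans h8 _; rewrite leq_add2r.
  by rewrite -(leq_add2l 5).
have [e3|n3] := eqVneq (\dim (U :&: W)) 3%N; first exact: main3.
exfalso.
have d4 : (4 <= \dim (U :&: W))%N by rewrite ltn_neqAle eq_sym n3 d3.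
have eW : (U :&: W)%VS = W.
  apply/eqP; rewrite eqEdim capvSr /=.
  by apply: leq_trans dW2 d4.
have sub : (W <= U)%VS by rewrite -eW capvSl.
by apply: (Bsp_notin hU); apply: (subvP sub).
Qed.

Lemma ax0_S1 : ax0 \in S1. Proof. by rewrite memv_span // !inE eqxx. Qed.
Lemma ax2_S1 : ax2 \in S1. Proof. by rewrite memv_span // !inE eqxx ?orbT. Qed.
Lemma ax1_S2 : ax1 \in S2. Proof. by rewrite memv_span // !inE eqxx. Qed.
Lemma ax3_S2 : ax3 \in S2. Proof. by rewrite memv_span // !inE eqxx ?orbT. Qed.

Lemma main (U : {vspace V}) : is_assoc_subalgebra U -> one \in U -> (3 <= \dim U)%N ->
  U = S1 \/ U = S2.
Proof.
move=> hU oU dU.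
have [e3|n3] := eqVneq (\dim U) 3%N; first exact: main3.
exfalso.
have d4 : (4 <= \dim U)%N by rewrite ltn_neqAle eq_sym n3 dU.
have hs : (S2 <= U)%VS.
  case: (cap_case hU oU d4 (@Wsig_sub R) (dim_Wsig R) (Wsig_le R) (one_Wsig R)
     (pp_Wsig R) (qq_Wsig R) (vv_Wsig R)) => e.
    exfalso; move: (ax0_Wsig R); apply/negP/negPn.
    by apply: (subvP (capvSr U Wsig)); rewrite e ax0_S1.
  by rewrite -e capvSl.
have ht : (S1 <= U)%VS.
  case: (cap_case hU oU d4 (@Wtau_sub R) (dim_Wtau R) (Wtau_le R) (one_Wtau R)
     (pp_Wtau R) (qq_Wtau R) (vv_Wtau R)) => e; last first.
    exfalso; move: (ax1_Wtau R); apply/negP/negPn.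
    by apply: (subvP (capvSr U Wtau)); rewrite e ax1_S2.
  by rewrite -e capvSl.
have a0 := subvP ht _ ax0_S1; have a2 := subvP ht _ ax2_S1.
have a1 := subvP hs _ ax1_S2; have a3 := subvP hs _ ax3_S2.
apply: (Bsp_notin hU); rewrite ?memvD //.
have -> : vv = (5/2) *: one - 2 *: (ax0 + ax1 + ax2 + ax3).
  by apply: rowP5; rewrite /A.one /A.vv /A.ax0 /A.ax1 /A.ax2 /A.ax3 !mxE /=; field.
by rewrite memvB // memvZ // !memvD.
Qed.

End L.

End L.
Import L.

Module M.
Set Implicit Arguments. Unset Strict Implicit. Unset Printing Implicit Defensive.
Local Open Scope ring_scope.
Section M.
Variable R : realType.
Local Notation V := (V4A R).
Local Notation mul := (@v4a_mul R).
Local Notation one := (@A.one R).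
Local Notation ax0 := (@A.ax0 R).
Local Notation ax1 := (@A.ax1 R).
Local Notation ax2 := (@A.ax2 R).
Local Notation ax3 := (@A.ax3 R).
Local Notation vv := (@A.vv R).
Local Notation idem := (@Defs.idempotent R).
Local Notation S1 := (@H.S1 R).
Local Notation S2 := (@H.S2 R).
Local Notation Wsig := (@H.Wsig R).
Local Notation Wtau := (@H.Wtau R).
Local Notation Bsp := (@H.Bsp R).
Local Notation pp := (@H.pp R).
Local Notation qq := (@H.qq R).
Local Notation K1 := (@H.K1 R).
Local Notation K2 := (@H.K2 R).


Lemma S1_neq_S2 : S1 != S2.
Proof.
apply/eqP => e; move: (ax0_Wsig R); apply/negP/negPn.
by apply: (subvP (S2_Wsig R)); rewrite -e ax0_S1.
Qed.

Lemma one_S1 : one \in S1.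
Proof.
have -> : one = ax0 + ax2 + (one - ax0 - ax2) by apply: rowP5; rewrite !mxE /=; ring.
apply: memvD; first by apply: memvD; [exact: ax0_S1 | exact: ax2_S1].
by rewrite memv_span // !inE eqxx !orbT.
Qed.

Lemma one_S2 : one \in S2.
Proof.
have -> : one = ax1 + ax3 + (one - ax1 - ax3) by apply: rowP5; rewrite !mxE /=; ring.
apply: memvD; first by apply: memvD; [exact: ax1_S2 | exact: ax3_S2].
by rewrite memv_span // !inE eqxx !orbT.
Qed.

Lemma S1_max : is_max_assoc_subalgebra S1.
Proof.
split; first exact: S1_assoc.
move=> W hW sub.
have oW : one \in W := subvP sub _ one_S1.
have dW : (3 <= \dim W)%N by have := dimvS sub; rewrite dim_S1.
case: (main hW oW dW) => // e; exfalso.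
move: (ax0_Wsig R); apply/negP/negPn.
by apply: (subvP (S2_Wsig R)); rewrite -e (subvP sub) // ax0_S1.
Qed.

Lemma S2_max : is_max_assoc_subalgebra S2.
Proof.
split; first exact: S2_assoc.
move=> W hW sub.
have oW : one \in W := subvP sub _ one_S2.
have dW : (3 <= \dim W)%N by have := dimvS sub; rewrite dim_S2.
case: (main hW oW dW) => // e; exfalso.
move: (ax1_Wtau R); apply/negP/negPn.
by apply: (subvP (S1_Wtau R)); rewrite -e (subvP sub) // ax1_S2.
Qed.

Lemma dim3_not_trivial (U : {vspace V}) : \dim U = 3%N -> ~ is_trivial_subalgebra U.
Proof.
move=> dU [e [_ [h|h|[x [_ _ _ h]]]]]; move: dU; rewrite h.
- by rewrite dimv0.
- by move=> d; have := dim_vline e; rewrite d; case: (e != 0).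
- by move=> d; have := dim_span [:: x; e - x]; rewrite d.
Qed.

Lemma is_identity_one : is_identity one.
Proof. exact: one_mul. Qed.

Lemma dim_le2_trivial (U : {vspace V}) : is_assoc_subalgebra U -> one \in U ->
  (\dim U <= 2)%N -> is_trivial_subalgebra U.
Proof.
move=> [hU1 hU2] oU dU; exists one; split; first exact: is_identity_one.
have d1 : (1 <= \dim U)%N.
  rewrite lt0n dimv_eq0; apply/negP => /eqP U0.
  by move: oU; rewrite U0 memv0 (negbTE (one_neq0 R)).
have lU : (<[one]> <= U)%VS by rewrite -memvE.
have [e1|n1] := eqVneq (\dim U) 1%N.
  apply: Or32; apply/eqP; rewrite eq_sym eqEdim lU e1 dim_vline one_neq0.
  by [].
have d2 : \dim U = 2%N by apply/eqP; rewrite eqn_leq dU ltn_neqAle eq_sym n1 d1.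
apply: Or33.
have : ~~ (U <= <[one]>)%VS.
  by apply/negP => /dimvS; rewrite d2 dim_vline one_neq0.
case/subvPn => u uU uo.
have hsp : (U <= <<[:: u; one]>>)%VS.
  have sub : (<<[:: u; one]>> <= U)%VS.
    by apply/span_subvP => z; rewrite !inE => /orP [] /eqP ->.
  have dd : \dim <<[:: u; one]>>%VS = 2%N.
    apply/eqP; change (free [:: u; one]).
    by rewrite free_cons seq1_free one_neq0 span_seq1 uo.
  have : (<<[:: u; one]>>%VS == U) by rewrite eqEdim sub d2 dd leqnn.
  by move/eqP => ->; apply: subvv.
have [a [b hab]] := span2P (subvP hsp _ (hU1 _ _ uU uU)).
have [c1 [c2 [hi hn0 hne he]]] := quad (b := b) (one_idem R) (one_neq0 R) (one_mul u) uo hab.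
set x := c1 *: one + c2 *: u in hi hn0 hne he *.
have xU : x \in U by rewrite memvD // memvZ.
exists x; split => //.
have [t1 t2 t3 t4 t5] := triple_from (one_idem R) hi (one_mul x).
have hxo : mul x (one - x) = 0 by rewrite A.vmulBr mul_one hi subrr.
have n2 : one - x != 0 by rewrite subr_eq0 eq_sym.
have dd := dim_orth2 hi t1 hn0 n2 hxo.
have sub : (<<[:: x; one - x]>> <= U)%VS.
  by apply/span_subvP => z; rewrite !inE => /orP [] /eqP ->; rewrite ?memvB.
by apply/eqP; rewrite eq_sym eqEdim sub d2 dd leqnn.
Qed.

Lemma uniq_max (U : {vspace V}) : is_max_assoc_subalgebra U -> ~ is_trivial_subalgebra U ->
  U = S1 \/ U = S2.
Proof.
move=> hm nt.
have oU := max_one hm.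
have [hU _] := hm.
apply: main => //.
rewrite ltnNge; apply/negP => d2.
exact: nt (dim_le2_trivial hU oU d2).
Qed.

End M.

End M.
Import M.

Module N.
Set Implicit Arguments. Unset Strict Implicit. Unset Printing Implicit Defensive.
Local Open Scope ring_scope.
Section N.
Variable R : realType.
Local Notation V := (V4A R).
Local Notation mul := (@v4a_mul R).
Local Notation one := (@A.one R).
Local Notation ax0 := (@A.ax0 R).
Local Notation ax1 := (@A.ax1 R).
Local Notation ax2 := (@A.ax2 R).
Local Notation ax3 := (@A.ax3 R).
Local Notation vv := (@A.vv R).
Local Notation idem := (@Defs.idempotent R).
Local Notation S1 := (@H.S1 R).
Local Notation S2 := (@H.S2 R).
Local Notation Wsig := (@H.Wsig R).
Local Notation Wtau := (@H.Wtau R).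
Local Notation Bsp := (@H.Bsp R).
Local Notation pp := (@H.pp R).
Local Notation qq := (@H.qq R).
Local Notation K1 := (@H.K1 R).
Local Notation K2 := (@H.K2 R).


Definition rr (n : nat) : R := n.+1%:R.
Definition DD (n : nat) : R := 2 * rr n ^+ 2 + rr n + 2.
Definition xf (n : nat) : V :=
  vec (2 * rr n * (rr n + 1) / DD n) (2 * (rr n + 1) / DD n)
      (2 * rr n * (rr n + 1) / DD n) (2 * (rr n + 1) / DD n) (- (3 * rr n) / DD n).

Lemma rr_ge1 n : 1 <= rr n.
Proof. by rewrite /rr ler1n. Qed.

Lemma DD_gt0 n : 0 < DD n.
Proof. have := rr_ge1 n; rewrite /DD => h; nra. Qed.

Lemma xf_idem n : idem (xf n).
Proof.
have hD := DD_gt0 n; have hD0 : DD n != 0 by rewrite gt_eqF.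
rewrite /Defs.idempotent; apply: rowP5;
  rewrite /xf !(mulE0, mulE1, mulE2, mulE3, mulE4, mxE) /P0 /P1 /P2 /P3 /P4 /=;
  rewrite /DD in hD0 *; field;
  have h0 : (0 : R) <= n%:R := ler0n R n; apply: lt0r_neq0; nra.
Qed.


Lemma xf1_pos n : 0 < xf n 0 i1.
Proof.
rewrite /xf mxE /=; have := DD_gt0 n; have := rr_ge1 n => h1 h2.
by apply: divr_gt0 => //; lra.
Qed.

Lemma xf0_big n : 2 / 5 < xf n 0 i0.
Proof.
rewrite /xf mxE /=; have hD := DD_gt0 n; have h1 := rr_ge1 n.
have hD0 : DD n != 0 by rewrite gt_eqF.
have e : 2 * rr n * (rr n + 1) / DD n - 2 / 5 = (2 * rr n * (rr n + 1) - 2 / 5 * DD n) / DD n.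
  by field.
rewrite -subr_gt0 e divr_gt0 // /DD; nra.
Qed.

Lemma xf01 n : xf n 0 i0 = rr n * xf n 0 i1.
Proof.
rewrite /xf !mxE /=; have hD0 : DD n != 0 by rewrite gt_eqF // DD_gt0.
by field.
Qed.

Lemma xf_n0 n : xf n != 0.
Proof. by apply: (@vec_neq0 R _ i1); rewrite gt_eqF // xf1_pos. Qed.

Lemma xf_n1 n : xf n != one.
Proof.
apply/eqP => /(congr1 (fun z : V => z 0 i4)); rewrite /xf /A.one !mxE /=.
have hD := DD_gt0 n; have h1 := rr_ge1 n.
move=> h; have : - (3 * rr n) / DD n < 0 by rewrite mulNr oppr_lt0 divr_gt0 //; lra.
by rewrite h; lra.
Qed.

Lemma xf_notS1 n : xf n \notin S1.
Proof.
apply/negP => /(subvP (S1_K1 R)) /memK1P; rewrite /xf !mxE /=.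
have hD := DD_gt0 n; have h1 := rr_ge1 n; have hD0 : DD n != 0 by rewrite gt_eqF.
move=> h.
have : 2 * (rr n + 1) + 6 * rr n = 0.
  have e : 2 * (rr n + 1) + 6 * rr n = (2 * (rr n + 1) / DD n - 2 * (- (3 * rr n) / DD n)) * DD n.
    by field.
  by rewrite e h subrr mul0r.
lra.
Qed.

Lemma xf_notS2 n : xf n \notin S2.
Proof.
apply/negP => /(subvP (S2_K2 R)) /memK2P; rewrite /xf !mxE /=.
have hD := DD_gt0 n; have h1 := rr_ge1 n; have hD0 : DD n != 0 by rewrite gt_eqF.
move=> h.
have : 2 * rr n * (rr n + 1) + 6 * rr n = 0.
  have e : 2 * rr n * (rr n + 1) + 6 * rr n =
    (2 * rr n * (rr n + 1) / DD n - 2 * (- (3 * rr n) / DD n)) * DD n.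
    by field.
  by rewrite e h subrr mul0r.
nra.
Qed.

Definition Vf (n : nat) : {vspace V} := <<[:: xf n; one - xf n]>>%VS.

Lemma Vf_facts n : [/\ idem (xf n), idem (one - xf n), mul (xf n) (one - xf n) = 0,
   xf n != 0 & one - xf n != 0].
Proof.
have hx := xf_idem n.
have [t1 _ _ _ _] := triple_from (one_idem R) hx (one_mul (xf n)).
split => //.
- by rewrite A.vmulBr mul_one hx subrr.
- exact: xf_n0.
- by rewrite subr_eq0 eq_sym xf_n1.
Qed.

Lemma Vf_max n : is_max_assoc_subalgebra (Vf n).
Proof.
have [h1 h2 h3 h4 h5] := Vf_facts n.
split; first exact: assoc2.
move=> W hW sub.
have xW : xf n \in W by apply: (subvP sub); rewrite memv_span // !inE eqxx.
have yW : one - xf n \in W by apply: (subvP sub); rewrite memv_span // !inE eqxx orbT.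
have oW : one \in W.
  by have := memvD xW yW; rewrite addrC subrK.
have dV := dim_orth2 h1 h2 h4 h5 h3.
have [d3|d2] := leqP 3 (\dim W).
  case: (main hW oW d3) => e; exfalso.
    by move: (xf_notS1 n); rewrite -e xW.
  by move: (xf_notS2 n); rewrite -e xW.
apply/eqP; rewrite eq_sym eqEdim sub dV.
by rewrite -ltnS.
Qed.

Lemma Vf_inj : injective Vf.
Proof.
move=> n m e.
have [h1 h2 h3 h4 h5] := Vf_facts n.
have xm : xf m \in Vf n by rewrite e memv_span // !inE eqxx.
have [k1 [k2 hk]] := span2P xm.
have hm := xf_idem m.
have hsq : k1 ^+ 2 *: xf n + k2 ^+ 2 *: (one - xf n) = k1 *: xf n + k2 *: (one - xf n).
  by rewrite !expr2 -prod2 // -hk hm.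
have hk1 : k1 * (k1 - 1) = 0.
  have := congr1 (mul (xf n)) hsq.
  rewrite !A.vmulDr !A.vmulZr h1 h3 !scaler0 !addr0 => /eqP.
  rewrite -subr_eq0 -scalerBl scaler_eq0 (negbTE h4) orbF => /eqP.
  by move=> hh; rewrite mulrBr mulr1 -expr2.
have hk2 : k2 * (k2 - 1) = 0.
  have := congr1 (mul (one - xf n)) hsq.
  rewrite !A.vmulDr !A.vmulZr h2 (A.vmulC _ (xf n)) h3 !scaler0 !add0r => /eqP.
  rewrite -subr_eq0 -scalerBl scaler_eq0 (negbTE h5) orbF => /eqP.
  by move=> hh; rewrite mulrBr mulr1 -expr2.
have c0 := xf0_big m; have c0' := xf0_big n.
case/prod0_2: hk1 => hk1; case/prod0_2: hk2 => hk2.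
- by move: (xf_n0 m); rewrite hk hk1 hk2 !scale0r addr0 eqxx.
- exfalso; have k21 : k2 = 1 by lra.
  move: c0; rewrite hk hk1 k21 scale0r add0r scale1r ?mxE /A.one ?mxE /=.
  move=> c0; move: c0'; rewrite /xf mxE /= => c0'; clear -c0 c0'; lra.
- have k11 : k1 = 1 by lra.
  have exm : xf m = xf n by rewrite hk k11 hk2 scale0r addr0 scale1r.
  have hp := xf1_pos n.
  have : rr m * xf n 0 i1 = rr n * xf n 0 i1 by rewrite -xf01 -exm xf01 exm.
  move/(mulIf (lt0r_neq0 hp)) => /eqP; rewrite /rr eqr_nat eqSS => /eqP.
  by [].
- exfalso; have k11 : k1 = 1 by lra.
  have k21 : k2 = 1 by lra.
  by move: (xf_n1 m); rewrite hk k11 k21 !scale1r addrC subrK eqxx.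
Qed.

End N.

End N.
Import N.

Theorem mainTheorem10 (R : realType) :
  (~ exists s : seq {vspace V4A R},
       forall U : {vspace V4A R}, is_max_assoc_subalgebra U -> U \in s) /\
  (exists U1 U2 : {vspace V4A R},
     [/\ U1 != U2,
         is_max_assoc_subalgebra U1 /\ ~ is_trivial_subalgebra U1,
         is_max_assoc_subalgebra U2 /\ ~ is_trivial_subalgebra U2 &
         forall U : {vspace V4A R},
           is_max_assoc_subalgebra U -> ~ is_trivial_subalgebra U ->
           U = U1 \/ U = U2]).
Proof.
split.
- move=> [s hs].
  pose L := [seq Vf R n | n <- iota 0 (size s).+1].
  have uL : uniq L by rewrite map_inj_uniq ?iota_uniq //; exact: Vf_inj.
  have sub : {subset L <= s} by move=> U /mapP [n _ ->]; apply: hs; apply: Vf_max.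
  by have := uniq_leq_size uL sub; rewrite size_map size_iota ltnn.
- exists (S1 R), (S2 R); split.
  + exact: S1_neq_S2.
  + by split; [exact: S1_max | apply: dim3_not_trivial; exact: dim_S1].
  + by split; [exact: S2_max | apply: dim3_not_trivial; exact: dim_S2].
  + by move=> U hm nt; exact: uniq_max hm nt.
Qed.
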